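(* For a given policy $\pi$ and goal $s_g$, the Wasserstein distance of the state visitation measure of $\pi$ from the goal distribution $\rho_g=\delta(s_g)$ under the ground metric $d^\pi_T$ can be written as $$W_1^\pi(\rho_\pi,\rho_g)=\mathop{\mathbb{E}}_{s_0\sim\rho_0}\left[h\big(d^\pi_T(s_0,s_g)\big)+\frac{\gamma}{1-\gamma}\big(\Delta^\pi_{\text{Jensen}}(s_0)-1\big)\right],$$ where $h$ is an increasing function of $d^\pi_T$.
   Context: A goal-conditioned MDP has discrete state space $\mathcal{S}$, discrete actions, goal-dependent transitions $P(\cdot\mid s,a,s_g)$, start-state distribution $\rho_0$, and discount $\gamma\in[0,1)$; reward is $\mathbb{I}[s_{t+1}=s_g]$ and the episode enters an absorbing zero-reward state after reaching $s_g$. For a policy $\pi$, $T(s_g\mid\pi,s)$ is the first time-step at which $s_g$ is encountered starting from $s$ and following $\pi$; $d^\pi_T(s,s_g):=\mathbb{E}[T(s_g\mid\pi,s)]$ is the time-step quasimetric, and $V^\pi(s\mid s_g)=\mathbb{E}[\gamma^{T(s_g\mid\pi,s)}]$. The Jensen gap is $\Delta^\pi_{\text{Jensen}}(s):=V^\pi(s\mid s_g)-\gamma^{d^\pi_T(s,s_g)}$. The goal-conditioned state visitation distribution is $\rho_\pi(s\mid s_g)=\mathbb{E}_{s_0\sim\rho_0}\big[(1-\gamma)\sum_{t=0}^\infty\gamma^t P(s_t=s\mid\pi,s_g)\big]$, and $\rho_g=\delta(s_g)$ is the Dirac measure at the goal. The Wasserstein-1 distance under ground quasimetric $d^\pi_T$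 is $W_1^\pi(\rho_\pi,\rho_g)=\sum_{s\in\mathcal{S}}\rho_\pi(s\mid s_g)\,d^\pi_T(s,s_g)$. *)

(* Defs.v *)
From HB Require Import structures.
From mathcomp Require Import all_boot all_order all_algebra.
From mathcomp Require Import all_classical all_reals all_analysis.
Set Implicit Arguments. Unset Strict Implicit. Unset Printing Implicit Defensive.
Import Order.TTheory GRing.Theory Num.Theory numFieldNormedType.Exports.
Local Open Scope ring_scope.

Section GCMDP.
Variables (R : realType) (S A : finType).

(* Goal-conditioned transitions: P s a g s' = P(s' | s, a, s_g). *)
Definition is_transition (P : S -> A -> S -> S -> R) :=
  forall s a g, (forall s', 0 <= P s a g s') /\ \sum_s' P s a g s' = 1.

(* Goal-conditioned stochastic policy: pi g s a = pi(a | s, s_g). *)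
Definition is_policy (pi : S -> S -> A -> R) :=
  forall g s, (forall a, 0 <= pi g s a) /\ \sum_a pi g s a = 1.

Definition is_distribution (rho : S -> R) :=
  (forall s, 0 <= rho s) /\ \sum_s rho s = 1.

Variables (P : S -> A -> S -> S -> R) (pi : S -> S -> A -> R) (g : S).

Definition kernel (s s' : S) : R := \sum_a pi g s a * P s a g s'.

(* hitp t s = Pr[ T(g | pi, s) = t ]: first-passage probabilities *)
Fixpoint hitp (t : nat) (s : S) : R :=
  match t with
  | 0 => (s == g)%:R
  | t'.+1 => (s != g)%:R * \sum_s' kernel s s' * hitp t' s'
  end.

Definition dT (s : S) : R := limn (series (fun t => t%:R * hitp t s)).

Definition Vpi (gamma : R) (s : S) : R :=
  limn (series (fun t => gamma ^+ t * hitp t s)).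

Definition jensen_gap (gamma : R) (s : S) : R := Vpi gamma s - powR gamma (dT s).

Variable rho0 : S -> R.

(* occ t s = Pr[s_t = s], where after reaching g the episode leaves S
   (absorbing zero-reward state, not an element of S). *)
Fixpoint occ (t : nat) (s : S) : R :=
  match t with
  | 0 => rho0 s
  | t'.+1 => \sum_(s' | s' != g) occ t' s' * kernel s' s
  end.

Definition visitation (gamma : R) (s : S) : R :=
  (1 - gamma) * limn (series (fun t => gamma ^+ t * occ t s)).

(* W_1^pi(rho_pi, delta(g)) under ground quasimetric d^pi_T *)
Definition W1 (gamma : R) : R := \sum_s visitation gamma s * dT s.

End GCMDP.

(* Main.v *)
Require Import Defs.
From HB Require Import structures.
From mathcomp Require Import all_boot all_order all_algebra.
From mathcomp Require Import all_classical all_reals all_analysis.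
From mathcomp Require Import ring lra.
Import Order.TTheory GRing.Theory Num.Theory numFieldNormedType.Exports.
Local Open Scope ring_scope.

Section Helpers.
Context {R : realType}.
Local Open Scope classical_set_scope.

Implicit Types (u v : nat -> R).

Lemma cvg_big (I : eqType) (r : seq I) (Pr : pred I) (f : I -> nat -> R) (l : I -> R) :
  (forall i, f i @ \oo --> l i) ->
  (fun n => \sum_(i <- r | Pr i) f i n) @ \oo --> \sum_(i <- r | Pr i) l i.
Proof.
move=> hf; elim: r => [|a r IH].
  have -> : (fun n : nat => \sum_(i <- [::] | Pr i) f i n) = (fun=> 0).
    by apply/funext => n; rewrite big_nil.
  rewrite big_nil; exact: cvg_cst.
case Pa: (Pr a).
  have -> : (fun n => \sum_(i <- a :: r | Pr i) f i n) =
            (fun n => f a n + \sum_(i <- r | Pr i) f i n).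
    by apply/funext => n; rewrite big_cons Pa.
  rewrite big_cons Pa; exact: cvgD.
have -> : (fun n => \sum_(i <- a :: r | Pr i) f i n) =
          (fun n => \sum_(i <- r | Pr i) f i n).
  by apply/funext => n; rewrite big_cons Pa.
by rewrite big_cons Pa.
Qed.

Lemma cvg_lim_eq {u v : nat -> R} {l : R} :
  cvgn u -> (forall n, u n.+1 = v n) -> v @ \oo --> l -> limn u = l.
Proof.
move=> cu uv vl.
have h : (fun n => u n.+1) @ \oo --> limn u by rewrite cvg_shiftS.
have e : (fun n => u n.+1) = v by apply/funext.
rewrite e in h.
exact: (cvg_unique _ h vl).
Qed.

Lemma alg (c D A Fn Fg Vn B : R) : c < 1 -> D = A + c*(D - Fn) ->
  Fg + Fn = 1 + c*Fn -> Fg + Vn = B + Vn -> (1-c)*D = A + c/(1-c)*(B-1).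
Proof.
move=> c1 e1 e2 e3.
have eB : Fg = B by apply: (addIr Vn).
subst Fg.
have hc : 1 - c != 0 by rewrite subr_eq0 gt_eqF.
have eF : Fn = (1 - B) / (1 - c).
  apply: (mulIf hc); rewrite divfK //.
  apply/eqP; rewrite -subr_eq0; apply/eqP.
  have -> : Fn * (1 - c) - (1 - B) = (B + Fn) - (1 + c * Fn) by ring.
  by rewrite e2 subrr.
have eD : (1 - c) * D = A - c * Fn.
  apply/eqP; rewrite -subr_eq0; apply/eqP.
  have -> : (1 - c) * D - (A - c * Fn) = D - (A + c * (D - Fn)) by ring.
  by rewrite -e1 subrr.
rewrite eD eF; field.
by rewrite hc.
Qed.

End Helpers.
Lemma h_incr (R : realType) (c : R) : 0 <= c -> c < 1 -> forall x y : R, 0 <= x -> x < y ->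
  x + c / (1 - c) * powR c x < y + c / (1 - c) * powR c y.
Proof.
move=> c0 c1 x y x0 xy.
have hc : 0 < 1 - c by rewrite subr_gt0.
have [->|cn0] := eqVneq c 0; first by rewrite !mul0r !addr0.
have cpos : 0 < c by rewrite lt_neqAle eq_sym cn0 c0.
rewrite /powR (negbTE cn0).
set L := ln c.
have L0 : L < 0 by apply: ln_lt0; rewrite cpos c1.
have key : c * (1 - L) < 1.
  have Ln : - L != 0 by rewrite oppr_eq0 lt_eqF.
  have h := @expR_gt1Dx R (- L) Ln.
  move: h; rewrite expRN lnK ?posrE // => h.
  by rewrite -[ltRHS](mulfV cn0) ltr_pM2l.
set d := y - x.
have d0 : 0 < d by rewrite subr_gt0.
have eY : y * L = x * L + d * L by rewrite /d; ring.
rewrite eY expRD.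
set E1 := expR (x * L); set E2 := expR (d * L).
have E10 : 0 < E1 := expR_gt0 _.
have E11 : E1 <= 1 by rewrite expR_le1 mulr_ge0_le0 // ltW.
have E21 : E2 <= 1 by rewrite expR_le1 mulr_ge0_le0 // ltW.
have E2g : 1 + d * L <= E2 := expR_ge1Dx _.
have s1 : c * E1 * (1 - E2) <= c * (1 - E2).
  by rewrite ler_wpM2r ?subr_ge0 // ler_piMr // ltW.
have s2 : c * (1 - E2) <= c * (- (d * L)) by apply: ler_wpM2l; [exact: ltW | lra].
have s3 : c * (- (d * L)) < (1 - c) * d.
  have : d * (c * (1 - L)) < d * 1 by rewrite ltr_pM2l.
  move=> h; nra.
have main : c * E1 * (1 - E2) / (1 - c) < d.
  by rewrite ltr_pdivrMr // [d * _]mulrC; exact: le_lt_trans (le_trans s1 s2) s3.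
have -> : y = x + d by rewrite /d; ring.
have -> : c / (1 - c) * (E1 * E2) = c / (1 - c) * E1 - c * E1 * (1 - E2) / (1 - c).
  by field; rewrite gt_eqF.
lra.
Qed.

Section MDP.
Local Open Scope classical_set_scope.
Variables (R : realType) (gamma : R) (S A : finType) (P : S -> A -> S -> S -> R)
  (pi : S -> S -> A -> R) (g : S) (rho0 : S -> R).
Hypotheses (g0 : 0 <= gamma) (g1 : gamma < 1) (HP : is_transition P) (Hpi : is_policy pi)
  (Hrho : is_distribution rho0)
  (Hh : forall s, cvgn (series (fun t => hitp P pi g t s)) /\
                 limn (series (fun t => hitp P pi g t s)) = 1 /\
                 cvgn (series (fun t => t%:R * hitp P pi g t s))).

Let k := Defs.kernel P pi g.
Let hp := hitp P pi g.
Let oc := occ P pi g rho0.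

Lemma k_ge0 s s' : 0 <= k s s'.
Proof.
rewrite /k /Defs.kernel; apply: sumr_ge0 => a _; apply: mulr_ge0.
  by case: (Hpi g s) => + _; apply.
by case: (HP s a g) => + _; apply.
Qed.

Lemma k_sum1 s : \sum_s' k s s' = 1.
Proof.
rewrite /k /Defs.kernel exchange_big /=.
under eq_bigr => a _ do rewrite -mulr_sumr (proj2 (HP s a g)) mulr1.
exact: (proj2 (Hpi g s)).
Qed.

Lemma hp_ge0 t s : 0 <= hp t s.
Proof.
elim: t s => [|t IH] s /=; first by rewrite /hp /=; case: (s == g).
rewrite /hp /=; apply: mulr_ge0; first by case: (s != g).
apply: sumr_ge0 => s' _; apply: mulr_ge0; [exact: k_ge0 | exact: IH].
Qed.

Lemma hp_g t : hp t.+1 g = 0.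
Proof. by rewrite /hp /= eqxx mul0r. Qed.

Lemma hp_S t s : s != g -> hp t.+1 s = \sum_s' k s s' * hp t s'.
Proof. by move=> sg; rewrite /hp /= sg mul1r. Qed.

Lemma oc_ge0 t s : 0 <= oc t s.
Proof.
elim: t s => [|t IH] s /=; first by rewrite /oc /=; case: Hrho.
rewrite /oc /=; apply: sumr_ge0 => s' _; apply: mulr_ge0; [exact: IH | exact: k_ge0].
Qed.

Lemma oc_sum t : \sum_s oc t s <= 1.
Proof.
elim: t => [|t IH]; first by rewrite /oc /= (proj2 Hrho).
rewrite /oc /= exchange_big /=.
apply: le_trans IH; rewrite [leRHS](bigID (fun s => s != g)) /= -[leLHS]addr0.
apply: lerD; last by apply: sumr_ge0 => s _; exact: oc_ge0.
apply: ler_sum => s _; rewrite -mulr_sumr k_sum1 mulr1 //.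
Qed.

Lemma oc_le1 t s : oc t s <= 1.
Proof.
apply: le_trans (oc_sum t); rewrite (bigD1 s) //= lerDl.
by apply: sumr_ge0 => s' _; exact: oc_ge0.
Qed.

Lemma cvgF s : cvgn (series (fun t => gamma ^+ t * oc t s)).
Proof.
apply: (@series_le_cvg _ _ (geometric 1 gamma)).
- by move=> n; apply: mulr_ge0; [exact: exprn_ge0 | exact: oc_ge0].
- by move=> n; apply: geometric_ge0.
- by move=> n /=; rewrite mul1r ler_piMr ?exprn_ge0 ?oc_le1.
- by apply: is_cvg_geometric_series; rewrite ger0_norm.
Qed.

Lemma cvgV s : cvgn (series (fun t => gamma ^+ t * hp t s)).
Proof.
apply: (@series_le_cvg _ _ (fun t => hp t s)).
- by move=> n; apply: mulr_ge0; [exact: exprn_ge0 | exact: hp_ge0].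
- by move=> n; apply: hp_ge0.
- by move=> n /=; rewrite ler_piMl ?hp_ge0 // exprn_ile1 // ltW.
- exact: (proj1 (Hh s)).
Qed.


Let Fv s := limn (series (fun t => gamma ^+ t * oc t s)).
Let dv s := dT P pi g s.
Let Vv s := Vpi P pi g gamma s.

Lemma F_rec s : Fv s = rho0 s + gamma * \sum_(s' | s' != g) Fv s' * k s' s.
Proof.
rewrite /Fv; apply: (cvg_lim_eq (v := fun n => rho0 s + gamma *
    \sum_(s' | s' != g) series (fun t => gamma ^+ t * oc t s') n * k s' s) (cvgF s)).
  move=> n; rewrite !seriesEord /= big_ord_recl /= expr0 mul1r; congr (_ + _).
  rewrite mulr_sumr; under [RHS]eq_bigr => s' _ do rewrite seriesEord /= mulr_suml mulr_sumr.
  under [LHS]eq_bigr => i _ do rewrite mulr_sumr.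
  rewrite exchange_big /=; apply: eq_bigr => s' _; apply: eq_bigr => i _.
  rewrite exprS /bump /= add0n.
  by rewrite /k !mulrA.
apply: cvgD; first exact: cvg_cst.
apply: cvgMl_tmp; apply: cvg_big => s'.
apply: cvgMr_tmp; exact: (cvgF s').
Qed.


Lemma d_g : dv g = 0.
Proof.
rewrite /dv /dT; apply: (cvg_lim_eq (v := fun=> 0) (proj2 (proj2 (Hh g)))); last exact: cvg_cst.
move=> n; rewrite seriesEord /= big_ord_recl /= mul0r add0r.
by apply: big1 => i _; rewrite ?eqxx /= ?mulr0n mul0r mulr0.
Qed.

Lemma V_g : Vv g = 1.
Proof.
rewrite /Vv /Vpi; apply: (cvg_lim_eq (v := fun=> 1) (cvgV g)); last exact: cvg_cst.
move=> n; rewrite seriesEord /= big_ord_recl /= eqxx expr0 mul1r big1 ?addr0 //.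
by move=> i _; rewrite ?eqxx /= ?mulr0n mul0r mulr0.
Qed.

Lemma d_rec s : s != g -> dv s = \sum_s' k s s' * (1 + dv s').
Proof.
move=> sg; rewrite /dv /dT.
apply: (cvg_lim_eq (v := fun n => \sum_s' k s s' *
   (series (fun t => hp t s') n + series (fun t => t%:R * hp t s') n))
   (proj2 (proj2 (Hh s)))).
  move=> n; rewrite !seriesEord /= big_ord_recl /= mul0r add0r.
  under [RHS]eq_bigr => s' _ do rewrite !seriesEord /= -big_split /= mulr_sumr.
  rewrite exchange_big /=; apply: eq_bigr => i _.
  rewrite sg mul1r add0n mulr_sumr; apply: eq_bigr => s' _.
  rewrite /hp /k natrD leq0n /=; ring.
apply: cvg_big => s'; apply: cvgMl_tmp; apply: cvgD.
  by rewrite -(proj1 (proj2 (Hh s'))); exact: (proj1 (Hh s')).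
exact: (proj2 (proj2 (Hh s'))).
Qed.

Lemma V_rec s : s != g -> Vv s = gamma * \sum_s' k s s' * Vv s'.
Proof.
move=> sg; rewrite /Vv /Vpi.
apply: (cvg_lim_eq (v := fun n => gamma * \sum_s' k s s' *
   series (fun t => gamma ^+ t * hp t s') n) (cvgV s)).
  move=> n; rewrite !seriesEord /= big_ord_recl /= (negbTE sg) mulr0 add0r.
  rewrite [RHS]mulr_sumr.
  under [RHS]eq_bigr => s' _ do rewrite !seriesEord /= !mulr_sumr.
  rewrite exchange_big /=; apply: eq_bigr => i _.
  rewrite mul1r add0n !mulr_sumr; apply: eq_bigr => s' _.
  rewrite /hp /k /bump leq0n /= exprS; ring.
apply: cvgMl_tmp; apply: cvg_big => s'; apply: cvgMl_tmp; exact: (cvgV s').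
Qed.


Lemma F_sum (x : S -> R) : \sum_s Fv s * x s =
  \sum_s rho0 s * x s + gamma * \sum_(s' | s' != g) Fv s' * \sum_s k s' s * x s.
Proof.
under eq_bigr => s _ do rewrite F_rec mulrDl.
rewrite big_split /=; congr (_ + _).
rewrite mulr_sumr; under [RHS]eq_bigr => s' _ do rewrite mulr_sumr mulr_sumr.
under eq_bigr => s _ do rewrite -mulrA mulr_suml mulr_sumr.
rewrite exchange_big /=; apply: eq_bigr => s' _; apply: eq_bigr => s _; ring.
Qed.

Lemma main_eq : W1 P pi g rho0 gamma =
  \sum_s rho0 s * dv s + gamma / (1 - gamma) * (\sum_s rho0 s * Vv s - 1).
Proof.
have Dd := F_sum dv; have D1 := F_sum (fun=> 1); have DV := F_sum Vv.
have m1 (f : S -> R) (Pr : pred S) : \sum_(s | Pr s) f s * 1 = \sum_(s | Pr s) f s.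
  by apply: eq_bigr => s _; rewrite mulr1.
have kd s' : s' != g -> \sum_s k s' s * dv s = dv s' - 1.
  move=> sg; rewrite (d_rec s' sg).
  under [in RHS]eq_bigr => s _ do rewrite mulrDr mulr1.
  by rewrite big_split /= k_sum1 addrAC subrr add0r.
have kV s' : s' != g -> gamma * \sum_s k s' s * Vv s = Vv s'.
  by move=> sg; rewrite (V_rec s' sg).
have eD : \sum_(s' | s' != g) Fv s' * \sum_s k s' s * dv s =
    \sum_(s' | s' != g) Fv s' * dv s' - \sum_(s' | s' != g) Fv s'.
  by rewrite -sumrB; apply: eq_bigr => s' sg; rewrite kd // mulrBr mulr1.
have e1 : \sum_(s' | s' != g) Fv s' * \sum_s k s' s * 1 = \sum_(s' | s' != g) Fv s'.
  by apply: eq_bigr => s' _; rewrite m1 k_sum1 mulr1.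
have eV : gamma * \sum_(s' | s' != g) Fv s' * \sum_s k s' s * Vv s =
    \sum_(s' | s' != g) Fv s' * Vv s'.
  by rewrite mulr_sumr; apply: eq_bigr => s' sg; rewrite mulrCA kV.
have sF (x : S -> R) : \sum_s Fv s * x s = Fv g * x g + \sum_(s | s != g) Fv s * x s.
  by rewrite (bigD1 g).
rewrite eD sF d_g mulr0 add0r in Dd.
rewrite e1 !m1 (proj2 Hrho) [\sum_s Fv s](bigD1 g) //= in D1.
rewrite eV sF V_g mulr1 in DV.
rewrite /W1 /visitation.
transitivity ((1 - gamma) * \sum_s Fv s * dv s).
  by rewrite mulr_sumr; apply: eq_bigr => s _; rewrite mulrA.
rewrite sF d_g mulr0 add0r.
exact: (alg _ _ _ _ _ _ _ g1 Dd D1 DV).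
Qed.

End MDP.

Theorem proposition3 (R : realType) (gamma : R) :
  0 <= gamma -> gamma < 1 ->
  exists h : R -> R,
    (forall x y : R, 0 <= x -> x < y -> h x < h y) /\
    forall (S A : finType) (P : S -> A -> S -> S -> R) (pi : S -> S -> A -> R)
           (g : S) (rho0 : S -> R),
      is_transition P -> is_policy pi -> is_distribution rho0 ->
      (forall s, cvgn (series (fun t => hitp P pi g t s)) /\
                 limn (series (fun t => hitp P pi g t s)) = 1 /\
                 cvgn (series (fun t => t%:R * hitp P pi g t s))) ->
      W1 P pi g rho0 gamma =
      \sum_s0 rho0 s0 * (h (dT P pi g s0)
                         + gamma / (1 - gamma) * (jensen_gap P pi g gamma s0 - 1)).
Proof.
move=> g0 g1.
exists (fun x => x + gamma / (1 - gamma) * powR gamma x); split.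
  by move=> x y; apply: h_incr.
move=> S A P pi g rho0 HP Hpi Hrho Hh.
rewrite main_eq //; apply/esym.
rewrite (eq_bigr (fun s => rho0 s * dT P pi g s + gamma / (1 - gamma) * (rho0 s * Vpi P pi g gamma s)
   - gamma / (1 - gamma) * rho0 s)); last first.
  by move=> s _; rewrite /jensen_gap /=; ring.
rewrite sumrB big_split /= -!mulr_sumr (proj2 Hrho); ring.
Qed.
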